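(* Let $M$ be a monoid with identity $1$. Then $\sigma_m^*(M)<\sigma_m(M)$ if and only if $M-\{1\}$ is a subsemigroup of $M$ which is a group and $\sigma_s(M-\{1\})>2$. Moreover, if $\sigma_m^*(M)<\sigma_m(M)$, then $\sigma_m^*(M)=2$.
   Context: A subsemigroup is a nonempty subset closed under the operation. For a monoid $M$: a submonoid is a subsemigroup containing the identity of $M$; a monoidal subsemigroup is a subsemigroup that is a monoid in its own right (identity possibly different from that of $M$). $\sigma_s$, $\sigma_m$, $\sigma_m^*$ denote the least positive integer $n$ such that the structure is the union of $n$ proper subsemigroups, proper submonoids, respectively proper monoidal subsemigroups, or $\infty$ if no such finite $n$ exists (with the convention that $\infty<\infty$ is false). *)

(* Defs.v *)
From Stdlib Require Import Arith Lia ClassicalEpsilon.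

Set Implicit Arguments.
Section Covers.
Variables (T : Type) (op : T -> T -> T).

Definition subsg (A S : T -> Prop) : Prop :=
  (exists x, S x) /\ (forall x, S x -> A x) /\
  (forall x y, S x -> S y -> S (op x y)).

Definition proper (A S : T -> Prop) : Prop := exists x, A x /\ ~ S x.

Definition is_identity_on (S : T -> Prop) (u : T) : Prop :=
  S u /\ forall x, S x -> op u x = x /\ op x u = x.

Definition covered_by (A : T -> Prop) (P : (T -> Prop) -> Prop) (n : nat) : Prop :=
  exists F : nat -> (T -> Prop),
    (forall i, i < n -> P (F i)) /\
    (forall x, A x <-> exists i, i < n /\ F i x).

(* k is the least positive n such that A is a union of n sets satisfying P;
   None encodes infinity (no such finite n). *)
Definition is_cover_number (A : T -> Prop) (P : (T -> Prop) -> Prop)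
    (k : option nat) : Prop :=
  match k with
  | Some n => 1 <= n /\ covered_by A P n /\
              forall m, 1 <= m -> covered_by A P m -> n <= m
  | None => forall n, 1 <= n -> ~ covered_by A P n
  end.

Definition cover_number (A : T -> Prop) (P : (T -> Prop) -> Prop) : option nat :=
  epsilon (inhabits None) (is_cover_number A P).

Definition sigma_s (A : T -> Prop) : option nat :=
  cover_number A (fun S => subsg A S /\ proper A S).

Definition sigma_m (e : T) : option nat :=
  cover_number (fun _ => True)
    (fun S => subsg (fun _ => True) S /\ S e /\ proper (fun _ => True) S).

Definition sigma_m_star : option nat :=
  cover_number (fun _ => True)
    (fun S => subsg (fun _ => True) S /\ (exists u, is_identity_on S u) /\
              proper (fun _ => True) S).

Definition is_group_on (A : T -> Prop) : Prop :=
  exists u, is_identity_on A u /\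
    forall x, A x -> exists y, A y /\ op x y = u /\ op y x = u.

End Covers.

(* strict order on nat ∪ {∞} (None = ∞), with ∞ < ∞ false *)
Definition ext_lt (a b : option nat) : Prop :=
  match a, b with
  | Some m, Some n => m < n
  | Some _, None => True
  | None, _ => False
  end.

(* Main.v *)
Require Import Defs.
From Stdlib Require Import Arith ClassicalEpsilon Classical Lia Wf_nat.

Lemma cn_spec {T} (A : T -> Prop) P : is_cover_number A P (cover_number A P).
Proof.
  unfold cover_number. apply epsilon_spec.
  destruct (classic (exists n, 1 <= n /\ covered_by A P n)) as [H|H].
  - destruct (dec_inh_nat_subset_has_unique_least_element
                (fun n => 1 <= n /\ covered_by A P n)) as [k [[Hk Hmin] _]].
    + intro n; apply classic.
    + exact H.
    + exists (Some k). simpl. destruct Hk. repeat split; auto.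
  - exists None. simpl. intros n Hn Hc. apply H. eauto.
Qed.

Lemma cn_le {T} (A:T->Prop) P m : 1 <= m -> covered_by A P m ->
  exists n, cover_number A P = Some n /\ n <= m.
Proof.
  intros Hm Hc. pose proof (cn_spec A P) as H.
  destruct (cover_number A P) as [n|]; simpl in H.
  - exists n. destruct H as [_ [_ H]]. split; auto.
  - exfalso; exact (H m Hm Hc).
Qed.

Lemma cn_ge2 {T} (A:T->Prop) (P : (T->Prop)->Prop) n :
  (forall S, P S -> proper A S) -> cover_number A P = Some n -> 2 <= n.
Proof.
  intros HP Hn. pose proof (cn_spec A P) as H. rewrite Hn in H. simpl in H.
  destruct H as [H1 [[F [HF Hcov]] _]].
  destruct (Nat.eq_dec n 1) as [->|]; [|lia].
  exfalso. destruct (HP _ (HF 0 ltac:(lia))) as [x [Ax Nx]].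
  apply Hcov in Ax. destruct Ax as [i [Hi Fi]]. assert (i = 0) by lia. subst. auto.
Qed.

Lemma lift {T} (op:T->T->T) e (idl : forall x, op e x = x) (idr : forall x, op x e = x) k :
  1 <= k ->
  covered_by (fun x => x <> e)
    (fun S => subsg op (fun x => x <> e) S /\ proper (fun x => x <> e) S) k ->
  covered_by (fun _ => True)
    (fun S => subsg op (fun _ => True) S /\ S e /\ proper (fun _ => True) S) k.
Proof.
  intros Hk [F [HF Hcov]].
  exists (fun i x => x = e \/ F i x). split.
  - intros i Hi. destruct (HF i Hi) as [[_ [Hsub Hcl]] [x [Nx NFx]]].
    unfold subsg, proper. split; [split; [|split]|split].
    + exists e; auto.
    + auto.
    + intros x0 y [->|H1] [->|H2].
      * left. rewrite idl. auto.
      * right. rewrite idl; auto.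
      * right. rewrite idr; auto.
      * right; auto.
    + left; auto.
    + exists x. split; auto. intros [H|H]; auto.
  - intros x; split; intros _; [|auto].
    destruct (classic (x = e)) as [->|Hx].
    + exists 0; split; auto.
    + destruct (proj1 (Hcov x) Hx) as [i [Hi Fi]]. exists i; auto.
Qed.

Lemma sm_le {T} (op:T->T->T) e m : 1 <= m ->
  covered_by (fun _ => True)
    (fun S => subsg op (fun _ => True) S /\ S e /\ proper (fun _ => True) S) m ->
  exists k, sigma_m op e = Some k /\ k <= m.
Proof. intros Hm Hc. exact (cn_le _ _ _ Hm Hc). Qed.

Lemma ss_le {T} (op:T->T->T) (A : T -> Prop) m : 1 <= m ->
  covered_by A (fun S => subsg op A S /\ proper A S) m ->
  exists k, sigma_s op A = Some k /\ k <= m.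
Proof. intros Hm Hc. exact (cn_le _ _ _ Hm Hc). Qed.

Lemma sms_le {T} (op:T->T->T) m : 1 <= m ->
  covered_by (fun _ => True)
    (fun S => subsg op (fun _ => True) S /\ (exists u, is_identity_on op S u) /\
              proper (fun _ => True) S) m ->
  exists k, sigma_m_star op = Some k /\ k <= m.
Proof. intros Hm Hc. exact (cn_le _ _ _ Hm Hc). Qed.

Lemma sms_two {T} (op:T->T->T) e (idl : forall x, op e x = x) (idr : forall x, op x e = x) u :
  subsg op (fun _ => True) (fun x => x <> e) ->
  is_identity_on op (fun x => x <> e) u ->
  sigma_m_star op = Some 2.
Proof.
  intros [_ [_ Hcl]] [Hu Hid].
  destruct (sms_le op 2) as [k [Hk Hle]]; [lia| |].
  - exists (fun i => if Nat.eqb i 0 then (fun x => x <> e) else (fun x => x = e)).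
    split.
    + intros i Hi. destruct (Nat.eqb i 0).
      * unfold subsg, proper. split; [split; [|split]|split].
        -- exists u; auto.
        -- auto.
        -- auto.
        -- exists u. split; auto.
        -- exists e; split; auto.
      * unfold subsg, proper. split; [split; [|split]|split].
        -- exists e; auto.
        -- auto.
        -- intros x y -> ->. apply idl.
        -- exists e. split; [reflexivity| intros x ->; rewrite idl; auto].
        -- exists u; split; auto.
    + intros x; split; intros _; [|auto].
      destruct (classic (x = e)) as [->|Hx].
      * exists 1; split; [lia|]; simpl; reflexivity.
      * exists 0; split; [lia|]; simpl; exact Hx.
  - assert (2 <= k).
    { apply (cn_ge2 (fun _ : T => True)
             (fun S => subsg op (fun _ => True) S /\ (exists u, is_identity_on op S u) /\
              proper (fun _ => True) S)); [intros S [_ [_ H]]; exact H| exact Hk]. }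
    rewrite Hk. f_equal. lia.
Qed.

Lemma nongroup_cover {T} (op:T->T->T) e
  (assoc : forall x y z, op x (op y z) = op (op x y) z) u :
  (forall x y, x <> e -> y <> e -> op x y <> e) ->
  is_identity_on op (fun x => x <> e) u ->
  ~ is_group_on op (fun x => x <> e) ->
  covered_by (fun x => x <> e)
    (fun S => subsg op (fun x => x <> e) S /\ proper (fun x => x <> e) S) 2.
Proof.
  intros Hcl [Hu Hid] Hng.
  assert (Hy : exists y, y <> e /\ ~ exists r, r <> e /\ op y r = u).
  { apply NNPP. intro Hn. apply Hng. exists u. split; [split; auto|].
    intros x Hx.
    assert (Hr : exists r, r <> e /\ op x r = u).
    { apply NNPP. intro H. apply Hn. eauto. }
    destruct Hr as [r [Hr Hxr]].
    assert (Hs : exists s, s <> e /\ op r s = u).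
    { apply NNPP. intro H. apply Hn. eauto. }
    destruct Hs as [s [Hs Hrs]].
    assert (x = s).
    { rewrite <- (proj2 (Hid x Hx)). rewrite <- Hrs. rewrite assoc. rewrite Hxr.
      apply (proj1 (Hid s Hs)). }
    subst s. exists r. auto. }
  destruct Hy as [y [Hye Hyr]].
  set (R := fun z => z <> e /\ exists r, r <> e /\ op z r = u).
  set (C := fun z => z <> e /\ ~ exists r, r <> e /\ op z r = u).
  exists (fun i => if Nat.eqb i 0 then R else C). split.
  - intros i Hi. destruct (Nat.eqb i 0).
    + unfold subsg, proper, R. split; [split; [|split]|].
      * exists u. split; auto. exists u. split; auto. apply (Hid u Hu).
      * intros x [Hx _]; auto.
      * intros x y0 [Hx [r1 [Hr1 E1]]] [Hy0 [r2 [Hr2 E2]]]. split; auto.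
        exists (op r2 r1). split; auto.
        rewrite <- assoc. rewrite (assoc y0 r2 r1). rewrite E2.
        rewrite (proj1 (Hid r1 Hr1)). auto.
      * exists y. split; auto. intros [_ H]. auto.
    + unfold subsg, proper, C. split; [split; [|split]|].
      * exists y. auto.
      * intros x [Hx _]; auto.
      * intros x y0 [Hx Nx] [Hy0 Ny0]. split; auto.
        intros [r [Hr E]]. apply Nx. exists (op y0 r). split; auto.
        rewrite assoc. auto.
      * exists u. split; auto. intros [_ H]. apply H. exists u. split; auto.
        apply (Hid u Hu).
  - intros x; split.
    + intros Hx. destruct (classic (exists r, r <> e /\ op x r = u)).
      * exists 0. split; [lia|]. simpl. split; auto.
      * exists 1. split; [lia|]. simpl. split; auto.
    + intros [i [Hi H]]. destruct (Nat.eqb i 0); destruct H; auto.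
Qed.

Lemma forward {T} (op : T -> T -> T) (e : T)
  (idl : forall x, op e x = x) (idr : forall x, op x e = x) :
  ext_lt (sigma_m_star op) (sigma_m op e) ->
  subsg op (fun _ => True) (fun x => x <> e) /\
  (exists u, is_identity_on op (fun x => x <> e) u) /\
  ext_lt (Some 2) (sigma_s op (fun x => x <> e)) /\ sigma_m_star op = Some 2.
Proof.
  intro H.
  destruct (sigma_m_star op) as [n|] eqn:Es; [|simpl in H; contradiction].
  pose proof (cn_spec (fun _ : T => True)
     (fun S => subsg op (fun _ => True) S /\ (exists u, is_identity_on op S u) /\
              proper (fun _ => True) S)) as Hsp.
  unfold sigma_m_star in Es. rewrite Es in Hsp. simpl in Hsp.
  destruct Hsp as [Hn1 [[F [HF Hcov]] Hmin]].
  assert (Hi0 : exists i, i < n /\ forall x, F i x <-> x <> e).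
  { apply NNPP. intro Hno.
    assert (Hpr : forall i, i < n -> exists x, x <> e /\ ~ F i x).
    { intros i Hi. apply NNPP. intro Hn.
      destruct (HF i Hi) as [_ [_ [z [_ Hz]]]].
      destruct (classic (F i e)) as [Fe|Fe].
      - apply Hz. destruct (classic (z = e)) as [->|Hze]; auto.
        apply NNPP. intro. apply Hn. eauto.
      - apply Hno. exists i. split; auto. intros x; split.
        + intros Fx ->. auto.
        + intros Hx. apply NNPP. intro. apply Hn. eauto. }
    destruct (sm_le op e n) as [k [Hk Hle]]; auto.
    - exists (fun i x => x = e \/ F i x). split.
      + intros i Hi. destruct (HF i Hi) as [[_ [_ Hcl]] _].
        destruct (Hpr i Hi) as [x [Hx Nx]].
        unfold subsg, proper. split; [split; [|split]|split].
        * exists e; auto.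
        * auto.
        * intros x0 y [->|H1] [->|H2].
          -- left. rewrite idl. auto.
          -- right. rewrite idl; auto.
          -- right. rewrite idr; auto.
          -- right; auto.
        * left; auto.
        * exists x. split; auto. intros [H'|H']; auto.
      + intros x; split; intros _; [|auto].
        destruct (proj1 (Hcov x) I) as [i [Hi Fi]]. exists i; auto.
    - rewrite Hk in H. simpl in H. lia. }
  destruct Hi0 as [i0 [Hi0 Hiff]].
  destruct (HF i0 Hi0) as [[_ [_ Hcl]] [[u [Hu Hid]] _]].
  assert (HsN : subsg op (fun _ => True) (fun x => x <> e)).
  { split; [|split].
    - exists u. apply Hiff; auto.
    - auto.
    - intros x y Hx Hy. apply Hiff. apply Hcl; apply Hiff; auto. }
  assert (HidN : is_identity_on op (fun x => x <> e) u).
  { split. apply Hiff; auto. intros x Hx. apply Hid. apply Hiff; auto. }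
  pose proof (sms_two op e idl idr _ HsN HidN) as H2.
  unfold sigma_m_star in H2. rewrite Es in H2. injection H2 as ->.
  split; [auto|split; [eauto|split; [|reflexivity]]].
  destruct (sigma_s op (fun x => x <> e)) as [j|] eqn:Ej; simpl; auto.
  destruct (Nat.lt_ge_cases 2 j) as [|Hj]; auto. exfalso.
  pose proof (cn_spec (fun x : T => x <> e)
     (fun S => subsg op (fun x => x <> e) S /\ proper (fun x => x <> e) S)) as Hsp.
  unfold sigma_s in Ej. rewrite Ej in Hsp. simpl in Hsp.
  destruct Hsp as [Hj1 [Hc _]].
  destruct (sm_le op e j) as [k [Hk Hle]]; auto.
  - apply lift; auto.
  - rewrite Hk in H. simpl in H. lia.
Qed.

Theorem mainTheorem20 (T : Type) (op : T -> T -> T) (e : T)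
  (assoc : forall x y z, op x (op y z) = op (op x y) z)
  (idl : forall x, op e x = x) (idr : forall x, op x e = x) :
  (ext_lt (sigma_m_star op) (sigma_m op e) <->
     (subsg op (fun _ => True) (fun x => x <> e) /\
      is_group_on op (fun x => x <> e) /\
      ext_lt (Some 2) (sigma_s op (fun x => x <> e)))) /\
  (ext_lt (sigma_m_star op) (sigma_m op e) -> sigma_m_star op = Some 2).
Proof.
  split; [split|].
  - intro H. destruct (forward op e idl idr H) as [HsN [[u Hid] [Hs _]]].
    split; auto. split; auto.
    apply NNPP. intro Hng.
    destruct HsN as [_ [_ Hcl]].
    pose proof (nongroup_cover op e assoc u (fun x y hx hy => Hcl x y hx hy) Hid Hng) as Hc.
    destruct (ss_le op (fun x => x <> e) 2) as [j [Hj Hle]]; auto.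
    rewrite Hj in Hs. simpl in Hs. lia.
  - intros [HsN [[u [Hid _]] Hs]].
    rewrite (sms_two op e idl idr _ HsN Hid).
    destruct (sigma_m op e) as [k|] eqn:Ek; simpl; auto.
    assert (Hk2 : 2 <= k).
    { apply (cn_ge2 (fun _ : T => True)
        (fun S => subsg op (fun _ => True) S /\ S e /\ proper (fun _ => True) S));
        [intros S [_ [_ H]]; exact H| exact Ek]. }
    destruct (Nat.eq_dec k 2) as [->|]; [|lia]. exfalso.
    pose proof (cn_spec (fun _ : T => True)
       (fun S => subsg op (fun _ => True) S /\ S e /\ proper (fun _ => True) S)) as Hsp.
    unfold sigma_m in Ek. rewrite Ek in Hsp. simpl in Hsp.
    destruct Hsp as [_ [[F [HF Hcov]] _]].
    destruct HsN as [_ [_ HclN]].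
    destruct (ss_le op (fun x => x <> e) 2) as [j [Hj Hle]]; [lia| |].
    + exists (fun i x => x <> e /\ F i x). split.
      * intros i Hi. destruct (HF i Hi) as [[_ [_ Hcl]] [Fe [z [_ Nz]]]].
        destruct (HF (1 - i) ltac:(lia)) as [_ [Fe' [x [_ Nx]]]].
        assert (Hx : x <> e) by (intros ->; auto).
        destruct (proj1 (Hcov x) I) as [i' [Hi' Fi']].
        assert (i' <> 1 - i) by (intros ->; auto).
        assert (i' = i) by lia. subst i'.
        unfold subsg, proper. split; [split; [|split]|].
        -- exists x; auto.
        -- intros y [Hy _]; auto.
        -- intros a b [Ha Fa] [Hb Fb]. split; auto.
        -- exists z. split; [intros ->; auto|]. intros [_ H5]; exact (Nz H5).
      * intros x; split.
        -- intros Hx. destruct (proj1 (Hcov x) I) as [i [Hi Fi]]. eauto.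
        -- intros [i [_ [Hx _]]]; auto.
    + rewrite Hj in Hs. simpl in Hs. lia.
  - intro H. exact (proj2 (proj2 (proj2 (forward op e idl idr H)))).
Qed.
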